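(* Let $F$ be a field of characteristic different from $2$, $Q_1,\dots,Q_4$ quaternion $F$-algebras with canonical involutions $\gamma_i$, $(D,\gamma)=(Q_1,\gamma_1)\otimes(Q_2,\gamma_2)$, and $u\in D$ invertible with $\gamma(u)=u$ and $\mathrm{Trd}_D(u)=0$, together with an isomorphism $\phi:(Q_3,\gamma_3)\otimes(Q_4,\gamma_4)\xrightarrow{\sim}(D,\mathrm{Int}(u^{-1})\circ\gamma)$. For a pure quaternion $q\in Q_4^0$, let $W_q=\phi(\{x\otimes q: x\in Q_3^0\})$. Then $\gamma(W_q)$ is a totally isotropic subspace of $D$ for the quadratic form $q_u(x)=\mathrm{Trd}_D(xu\gamma(x))$.
   Context: The canonical involution of a quaternion algebra $Q$ is $\gamma_Q(x)=\mathrm{Trd}_Q(x)-x$; $Q^0=\{x\in Q:\mathrm{Trd}_Q(x)=0\}$ is the space of pure quaternions. $\mathrm{Int}(a)(x)=axa^{-1}$; $\mathrm{Trd}_D$ is the reduced trace of $D$. *)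

(* Defs.v *)
From HB Require Import structures.
From mathcomp Require Import all_boot all_order all_algebra.
Set Implicit Arguments. Unset Strict Implicit. Unset Printing Implicit Defensive.
Import GRing.Theory.
Local Open Scope ring_scope.

(* Quaternion algebra (a,b)_F (char F <> 2, a,b <> 0), with F-basis
   e0 = 1, e1 = i, e2 = j, e3 = k = ij, where i^2 = a, j^2 = b, ij = -ji.
   An element is its coordinate row vector in 'rV[F]_4.
   e_m * e_n = qcoef a b m n * e_(qxor m n). *)

Definition qxor (m n : nat) : nat :=
  match m, n with
  | 0, x => x | x, 0 => x
  | 1, 1 => 0 | 1, 2 => 3 | 1, 3 => 2
  | 2, 1 => 3 | 2, 2 => 0 | 2, 3 => 1
  | 3, 1 => 2 | 3, 2 => 1 | 3, 3 => 0
  | _, _ => 0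
  end.

Section Quat.
Variable F : fieldType.

Definition qcoef (a b : F) (m n : nat) : F :=
  match m, n with
  | 0, _ => 1 | _, 0 => 1
  | 1, 1 => a | 2, 2 => b | 3, 3 => - (a * b)
  | 1, 2 => 1 | 2, 1 => -1
  | 1, 3 => a | 3, 1 => - a
  | 2, 3 => - b | 3, 2 => b
  | _, _ => 0
  end.

Definition qsc (a b : F) (m n k : 'I_4) : F :=
  if qxor m n == k then qcoef a b m n else 0.

Definition qsgn (m : 'I_4) : F := if val m == 0%N then 1 else -1.

Definition qgam (x : 'rV[F]_4) : 'rV[F]_4 := \row_m (qsgn m * x ord0 m).
Definition qtrd (x : 'rV[F]_4) : F := (x + qgam x) ord0 ord0.

(* Tensor product (a1,b1)_F (x) (a2,b2)_F : element X : 'M[F]_4 has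
   coordinate X m n on the basis vector e_m (x) e_n. *)
Definition tmul (a1 b1 a2 b2 : F) (X Y : 'M[F]_4) : 'M[F]_4 :=
  \matrix_(k, l) \sum_(m < 4) \sum_(n < 4) \sum_(m' < 4) \sum_(n' < 4)
     (qsc a1 b1 m m' k * qsc a2 b2 n n' l * X m n * Y m' n').

Definition tone : 'M[F]_4 := delta_mx ord0 ord0.

Definition tens (x y : 'rV[F]_4) : 'M[F]_4 := \matrix_(m, n) (x ord0 m * y ord0 n).

Definition tgam (X : 'M[F]_4) : 'M[F]_4 := \matrix_(m, n) (qsgn m * qsgn n * X m n).

(* reduced trace of the tensor product: Trd(x (x) y) = Trd_Q1(x) Trd_Q2(y),
   extended linearly; Trd_Q(e_m) = 2 if m = 0, 0 otherwise. *)
Definition qtrd_basis (m : 'I_4) : F := if val m == 0%N then 2 else 0.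
Definition ttrd (X : 'M[F]_4) : F :=
  \sum_(m < 4) \sum_(n < 4) qtrd_basis m * qtrd_basis n * X m n.

End Quat.

(* Main.v *)
Require Import Defs.
From HB Require Import structures.
From mathcomp Require Import all_boot all_order all_algebra ring.
Import GRing.Theory.
Local Open Scope ring_scope.
Set Implicit Arguments. Unset Strict Implicit.

Section Gen.
Variable R : comNzRingType. Variable I : finType. Variable c : I -> I -> I -> R.
Definition gmul (X Y : I -> R) (k : I) := \sum_i \sum_j c i j k * X i * Y j.

Lemma gmul_ext X X' Y Y' k : X =1 X' -> Y =1 Y' -> gmul X Y k = gmul X' Y' k.
Proof.
move=> hX hY; apply: eq_bigr => i _; apply: eq_bigr => j _; by rewrite hX hY.
Qed.

Lemma gmulA (hc : forall i j k l, \sum_p c i j p * c p k l = \sum_p c j k p * c i p l)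
  X Y Z l : gmul (gmul X Y) Z l = gmul X (gmul Y Z) l.
Proof.
rewrite /gmul.
transitivity (\sum_i \sum_j \sum_k \sum_p X i * Y j * Z k * (c i j p * c p k l)).
  under eq_bigr => p _ do under eq_bigr => k _ do rewrite big_distrr big_distrl /=.
  under eq_bigr => p _ do under eq_bigr => k _ do under eq_bigr => i _ do rewrite big_distrr big_distrl /=.
  rewrite exchange_big /=.
  under eq_bigr => k _ do rewrite exchange_big /=.
  rewrite exchange_big /=.
  apply: eq_bigr => i _.
  under eq_bigr => k _ do rewrite exchange_big /=.
  rewrite exchange_big /=.
  apply: eq_bigr => j _; apply: eq_bigr => k _; apply: eq_bigr => p _.
  by ring.
symmetry.
under eq_bigr => i _ do under eq_bigr => q _ do rewrite big_distrr /=.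
under eq_bigr => i _ do under eq_bigr => q _ do under eq_bigr => j _ do rewrite big_distrr /=.
apply: eq_bigr => i _.
rewrite exchange_big /=; apply: eq_bigr => j _.
rewrite exchange_big /=; apply: eq_bigr => k _.
rewrite -[in RHS]big_distrr /= hc big_distrr /=.
apply: eq_bigr => p _.
ring.
Qed.

Lemma gmul1l (e : I) (s : R) Y k (he : forall j k, c e j k = (j == k)%:R) :
  gmul (fun i => s * (i == e)%:R) Y k = s * Y k.
Proof.
rewrite /gmul (bigD1 e) //= [X in _ + X]big1 => [|i /negPf hi]; last first.
  by apply: big1 => j _; rewrite hi mulr0 mulr0 mul0r.
rewrite eqxx addr0 (bigD1 k) //= [X in _ + X]big1 => [|j /negPf hj]; last by rewrite he hj /=; ring.
by rewrite he eqxx addr0 /=; ring.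
Qed.

Lemma gmul1r (e : I) (s : R) X k (he : forall j k, c j e k = (j == k)%:R) :
  gmul X (fun i => s * (i == e)%:R) k = s * X k.
Proof.
rewrite /gmul (bigD1 k) //= [X in _ + X]big1 => [|i /negPf hi]; last first.
  rewrite (bigD1 e) //= [X in _ + X]big1 => [|j /negPf hj]; last by rewrite hj /=; ring.
  by rewrite he hi /=; ring.
rewrite addr0 (bigD1 e) //= [X in _ + X]big1 => [|j /negPf hj]; last by rewrite hj /=; ring.
by rewrite he !eqxx /=; ring.
Qed.
End Gen.

Section Main.
Variable F : fieldType.

Lemma qassoc (a b : F) (i j k l : 'I_4) :
  \sum_p qsc a b i j p * qsc a b p k l = \sum_p qsc a b j k p * qsc a b i p l.
Proof.
rewrite !big_ord_recl !big_ord0 /qsc.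
case: i => [[|[|[|[|i]]]] Hi] //; case: j => [[|[|[|[|j]]]] Hj] //;
case: k => [[|[|[|[|k]]]] Hk] //; case: l => [[|[|[|[|l]]]] Hl] //=; ring.
Qed.

Lemma sum_pair (G : 'I_4 * 'I_4 -> F) :
  \sum_p G p = \sum_p1 \sum_p2 G (p1, p2).
Proof. by rewrite pair_bigA; apply: eq_bigr; case. Qed.

Definition tc (a1 b1 a2 b2 : F) (p q r : 'I_4 * 'I_4) :=
  qsc a1 b1 p.1 q.1 r.1 * qsc a2 b2 p.2 q.2 r.2.
Definition flat (X : 'M[F]_4) := fun p : 'I_4 * 'I_4 => X p.1 p.2.

Lemma tcassoc (a1 b1 a2 b2 : F) i j k l :
  \sum_p tc a1 b1 a2 b2 i j p * tc a1 b1 a2 b2 p k l =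
  \sum_p tc a1 b1 a2 b2 j k p * tc a1 b1 a2 b2 i p l.
Proof.
rewrite !sum_pair /=.
transitivity ((\sum_p qsc a1 b1 i.1 j.1 p * qsc a1 b1 p k.1 l.1) *
              (\sum_p qsc a2 b2 i.2 j.2 p * qsc a2 b2 p k.2 l.2)).
  rewrite big_distrlr; apply: eq_bigr => p _; apply: eq_bigr => r _; rewrite /tc /=; ring.
rewrite !qassoc big_distrlr; apply: eq_bigr => p _; apply: eq_bigr => r _; rewrite /tc /=; ring.
Qed.

Lemma tmulE (a1 b1 a2 b2 : F) X Y k l :
  tmul a1 b1 a2 b2 X Y k l = gmul (tc a1 b1 a2 b2) (flat X) (flat Y) (k, l).
Proof.
rewrite mxE /gmul sum_pair /=.
apply: eq_bigr => m _; apply: eq_bigr => n _.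
rewrite sum_pair /=.
apply: eq_bigr => m' _; apply: eq_bigr => n' _; rewrite /tc /flat /=; ring.
Qed.

Lemma flat_tmul (a1 b1 a2 b2 : F) X Y :
  flat (tmul a1 b1 a2 b2 X Y) =1 gmul (tc a1 b1 a2 b2) (flat X) (flat Y).
Proof. by case=> k l; rewrite /flat tmulE. Qed.

Lemma tmulA (a1 b1 a2 b2 : F) X Y Z :
  tmul a1 b1 a2 b2 (tmul a1 b1 a2 b2 X Y) Z = tmul a1 b1 a2 b2 X (tmul a1 b1 a2 b2 Y Z).
Proof.
apply/matrixP => k l; rewrite !tmulE.
rewrite (@gmul_ext _ _ _ _ (gmul (tc a1 b1 a2 b2) (flat X) (flat Y)) _ (flat Z)) ?flat_tmul //.
rewrite gmulA; last exact: tcassoc.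
apply: gmul_ext => // p; by rewrite flat_tmul.
exact: flat_tmul.
Qed.

Lemma flat_tone (s : F) : flat (s *: tone F) =1 fun p => s * (p == (ord0, ord0))%:R.
Proof. by case=> m n; rewrite /flat !mxE. Qed.

Lemma tmul1l (a1 b1 a2 b2 : F) (s : F) X : tmul a1 b1 a2 b2 (s *: tone F) X = s *: X.
Proof.
apply/matrixP => k l; rewrite tmulE (@gmul_ext _ _ _ _ _ _ (flat X) _ (flat_tone s)) //.
rewrite gmul1l; first by rewrite !mxE.
move=> [j1 j2] [k1 k2]; rewrite /tc /qsc /= xpair_eqE.
have e1 : (j1 == k1 :> nat) = (j1 == k1) by [].
have e2 : (j2 == k2 :> nat) = (j2 == k2) by [].
rewrite e1 e2.
by case: (j1 == k1); case: (j2 == k2) => /=; rewrite ?mulr1 ?mulr0 ?mul0r.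
Qed.

Lemma qsc_r0 (a b : F) (j k : 'I_4) : qsc a b j ord0 k = (j == k)%:R.
Proof.
by rewrite /qsc; case: j => [[|[|[|[|j]]]] Hj] //=; case: k => [[|[|[|[|k]]]] Hk].
Qed.

Lemma tmul1r (a1 b1 a2 b2 : F) (s : F) X : tmul a1 b1 a2 b2 X (s *: tone F) = s *: X.
Proof.
apply/matrixP => k l; rewrite tmulE (@gmul_ext _ _ _ _ (flat X) _ _ _ _ (flat_tone s)) //.
rewrite gmul1r; first by rewrite !mxE.
move=> [j1 j2] [k1 k2]; rewrite /tc /= !qsc_r0 xpair_eqE.
by case: (j1 == k1); case: (j2 == k2) => /=; rewrite ?mulr1 ?mulr0 ?mul0r.
Qed.


Lemma tgamK (X : 'M[F]_4) : tgam (tgam X) = X.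
Proof.
have hs : forall m : 'I_4, qsgn F m * qsgn F m = 1.
  by move=> m; rewrite /qsgn; case: ifP => _; rewrite ?mulr1 // mulrNN mulr1.
apply/matrixP => m n; rewrite !mxE.
transitivity ((qsgn F m * qsgn F m) * (qsgn F n * qsgn F n) * X m n); first ring.
by rewrite !hs !mul1r.
Qed.

Lemma trd0 (h2 : (2%:R : F) != 0) (x : 'rV[F]_4) : qtrd x = 0 -> x ord0 ord0 = 0.
Proof.
rewrite /qtrd !mxE /qsgn /= mul1r => h.
have : x ord0 ord0 * 2%:R = 0 by rewrite mulr_natr mulr2n.
by move/eqP; rewrite mulf_eq0 (negPf h2) orbF => /eqP.
Qed.

Lemma tgam_tens (x q : 'rV[F]_4) : x ord0 ord0 = 0 -> q ord0 ord0 = 0 ->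
  tgam (tens x q) = tens x q.
Proof.
move=> x0 q0.
have hq : forall m : 'I_4, m != ord0 -> qsgn F m = -1.
  move=> m hm; rewrite /qsgn ifF //; apply/negP => /eqP h; move/eqP: hm; apply.
  exact: val_inj.
apply/matrixP => m n; rewrite !mxE.
case: (eqVneq m ord0) => [->|hm]; first by rewrite x0 !mul0r mulr0.
case: (eqVneq n ord0) => [->|hn]; first by rewrite q0 !mulr0.
rewrite (hq _ hm) (hq _ hn); ring.
Qed.

Lemma ttrdZ (s : F) X : ttrd (s *: X) = s * ttrd X.
Proof.
rewrite /ttrd mulr_sumr; apply: eq_bigr => m _; rewrite mulr_sumr; apply: eq_bigr => n _.
rewrite mxE; ring.
Qed.


Lemma qsq (a b : F) (x : 'rV[F]_4) : x ord0 ord0 = 0 ->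
  exists N, forall k, \sum_m \sum_m' qsc a b m m' k * x ord0 m * x ord0 m' = (k == ord0)%:R * N.
Proof.
move=> x0; exists (\sum_m \sum_m' qsc a b m m' ord0 * x ord0 m * x ord0 m') => k.
case: (eqVneq k ord0) => [->|hk]; first by rewrite mul1r.
move: hk; rewrite !big_ord_recl !big_ord0 /qsc /=.
case: k => [[|[|[|[|k]]]] Hk] //= _; rewrite x0; ring.
Qed.

Lemma tens_sq (a b c d : F) (x q : 'rV[F]_4) : x ord0 ord0 = 0 -> q ord0 ord0 = 0 ->
  exists s, tmul a b c d (tens x q) (tens x q) = s *: tone F.
Proof.
move=> x0 q0; have [N1 h1] := qsq a b x0; have [N2 h2] := qsq c d q0.
exists (N1 * N2); apply/matrixP => k l; rewrite mxE.
transitivity (\sum_m \sum_n \sum_m' \sum_n'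
   ((qsc a b m m' k * x ord0 m * x ord0 m') * (qsc c d n n' l * q ord0 n * q ord0 n'))).
  do 4 (apply: eq_bigr => ? _); rewrite !mxE; ring.
under eq_bigr => m _ do rewrite exchange_big /=.
transitivity ((\sum_m \sum_m' qsc a b m m' k * x ord0 m * x ord0 m') *
              (\sum_n \sum_n' qsc c d n n' l * q ord0 n * q ord0 n')).
  rewrite big_distrl; apply: eq_bigr => m _; rewrite big_distrl; apply: eq_bigr => m' _.
  rewrite big_distrr; apply: eq_bigr => n _; by rewrite big_distrr.
rewrite h1 h2 !mxE; case: (k == ord0); case: (l == ord0) => /=; ring.
Qed.

Lemma final (a1 b1 a2 b2 s : F) (u v w Y : 'M[F]_4) :
  tmul a1 b1 a2 b2 u v = tone F -> tmul a1 b1 a2 b2 v u = tone F ->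
  Y = tmul a1 b1 a2 b2 (tmul a1 b1 a2 b2 v w) u ->
  tmul a1 b1 a2 b2 Y Y = s *: tone F -> ttrd u = 0 ->
  ttrd (tmul a1 b1 a2 b2 (tmul a1 b1 a2 b2 w u) Y) = 0.
Proof.
move=> huv hvu hY hYY htu.
have hw : w = tmul a1 b1 a2 b2 (tmul a1 b1 a2 b2 u Y) v.
  rewrite hY !tmulA huv -[tone F]scale1r tmul1r scale1r -tmulA huv.
  by rewrite -[tone F]scale1r tmul1l scale1r.
rewrite {1}hw !tmulA -[tmul _ _ _ _ v (tmul _ _ _ _ u Y)]tmulA hvu.
by rewrite -[tone F]scale1r tmul1l scale1r hYY tmul1r ttrdZ htu mulr0.
Qed.

End Main.

Theorem claim4p5 (F : fieldType) (h2 : (2%:R : F) != 0)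
  (a1 b1 a2 b2 a3 b3 a4 b4 : F)
  (ha1 : a1 != 0) (hb1 : b1 != 0) (ha2 : a2 != 0) (hb2 : b2 != 0)
  (ha3 : a3 != 0) (hb3 : b3 != 0) (ha4 : a4 != 0) (hb4 : b4 != 0)
  (u v : 'M[F]_4)
  (huv : tmul a1 b1 a2 b2 u v = tone F) (hvu : tmul a1 b1 a2 b2 v u = tone F)
  (hgu : tgam u = u) (htu : ttrd u = 0)
  (phi : 'M[F]_4 -> 'M[F]_4)
  (phi_lin : forall (c : F) (X Y : 'M[F]_4), phi (c *: X + Y) = c *: phi X + phi Y)
  (phi_mul : forall X Y : 'M[F]_4,
      phi (tmul a3 b3 a4 b4 X Y) = tmul a1 b1 a2 b2 (phi X) (phi Y))
  (phi_one : phi (tone F) = tone F)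
  (phi_bij : bijective phi)
  (phi_inv : forall X : 'M[F]_4,
      phi (tgam X) = tmul a1 b1 a2 b2 (tmul a1 b1 a2 b2 v (tgam (phi X))) u)
  (q : 'rV[F]_4) (hq : qtrd q = 0) :
  forall x : 'rV[F]_4, qtrd x = 0 ->
    let w := tgam (phi (tens x q)) in
    ttrd (tmul a1 b1 a2 b2 (tmul a1 b1 a2 b2 w u) (tgam w)) = 0.
Proof.
move=> x hx w.
have x0 := trd0 h2 hx; have q0 := trd0 h2 hq.
have hX := tgam_tens x0 q0.
have [s hs] := tens_sq a3 b3 a4 b4 x0 q0.
have phi0 : phi 0 = 0.
  have h := phi_lin 1 0 0; rewrite !scale1r addr0 in h.
  by apply/(@addrI _ (phi 0)); rewrite -h addr0.
have hYY : tmul a1 b1 a2 b2 (phi (tens x q)) (phi (tens x q)) = s *: tone F.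
  by rewrite -phi_mul hs -[s *: tone F]addr0 phi_lin phi_one phi0 addr0.
have hY : phi (tens x q) = tmul a1 b1 a2 b2 (tmul a1 b1 a2 b2 v w) u.
  by rewrite -{1}hX phi_inv.
have hw : tgam w = phi (tens x q) by rewrite /w tgamK.
rewrite hw; exact: (final huv hvu hY hYY htu).
Qed.
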